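(* Let $G$ be a finitely presented group. Then $rdef(G)-1\le DG(G)$. In particular, if $rdef(G)>1$, then $G$ has a finite index subgroup with deficiency greater than one.
   Context: Let $Q=\langle X\mid R\rangle$ be a finite presentation of $G$, $X$ freely generating the free group $F_n$, $\varphi:F_n\to G$ the canonical map. Write $R=\{u_1^{m_1},\ldots,u_s^{m_s}\}$ with each $u_i\in F_n$ not a proper power in $F_n$. Let $R_G$ (the finite residual) be the intersection of all finite index subgroups of $G$, and $k_i$ the order of $\varphi(u_i)R_G$ in $G/R_G$. Then $rdef(Q)=n-\sum_{i=1}^s 1/k_i$, and the residual deficiency $rdef(G)$ is the supremum of $rdef(Q)$ over all finite presentations $Q$ of $G$. The deficiency of a finite presentation is (number of generators) $-$ (number of relators), $def(K)$ is the supremum over finite presentations of $K$, and $DG(G)=\sup_{H\leqslant_f G}\frac{def(H)-1}{|G:H|}$ over finite index subgroups $H$. *)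

(* Defs.v *)
From HB Require Import structures.
From mathcomp Require Import all_boot all_order all_algebra.
From mathcomp Require Import classical_sets boolp reals ereal.
Set Implicit Arguments. Unset Strict Implicit. Unset Printing Implicit Defensive.
Import Order.TTheory GRing.Theory Num.Theory.
Local Open Scope ring_scope.
Local Open Scope classical_set_scope.

Record group := Group {
  gT :> Type;
  gmul : gT -> gT -> gT;
  ginv : gT -> gT;
  gone : gT;
  gmulA : forall x y z, gmul x (gmul y z) = gmul (gmul x y) z;
  gmul1g : forall x, gmul gone x = x;
  gmulg1 : forall x, gmul x gone = x;
  gmulVg : forall x, gmul (ginv x) x = gone;
  gmulgV : forall x, gmul x (ginv x) = gone }.

Fixpoint gexp (G : group) (g : G) (k : nat) : G :=
  if k is k'.+1 then gmul g (gexp g k') else gone G.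

Record subgroup (G : group) := Subgroup {
  sg_mem :> G -> Prop;
  sg_one : sg_mem (gone G);
  sg_mul : forall x y, sg_mem x -> sg_mem y -> sg_mem (gmul x y);
  sg_inv : forall x, sg_mem x -> sg_mem (ginv x) }.

(* H has finite index j in G: j left cosets g_i H partition G *)
Definition index_is (G : group) (H : subgroup G) (j : nat) : Prop :=
  exists reps : 'I_j -> G,
    forall x : G, exists! i : 'I_j, H (gmul (ginv (reps i)) x).

Definition finite_index (G : group) (H : subgroup G) : Prop :=
  exists j, index_is H j.

Section SubGroupAsGroup.
Variables (G : group) (H : subgroup G).
Definition sub_carrier := {x : G | H x}.
Definition sub_mul (x y : sub_carrier) : sub_carrier :=
  exist _ (gmul (proj1_sig x) (proj1_sig y)) (sg_mul (proj2_sig x) (proj2_sig y)).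
Definition sub_inv (x : sub_carrier) : sub_carrier :=
  exist _ (ginv (proj1_sig x)) (sg_inv (proj2_sig x)).
Definition sub_one : sub_carrier := exist _ (gone G) (sg_one H).
Lemma sub_eq (x y : sub_carrier) : proj1_sig x = proj1_sig y -> x = y.
Proof.
case: x y => [x hx] [y hy] /= exy; subst y.
by rewrite (Prop_irrelevance hx hy).
Qed.
Lemma sub_mulA x y z : sub_mul x (sub_mul y z) = sub_mul (sub_mul x y) z.
Proof. by apply: sub_eq; rewrite /= gmulA. Qed.
Lemma sub_mul1 x : sub_mul sub_one x = x.
Proof. by apply: sub_eq; rewrite /= gmul1g. Qed.
Lemma sub_mulg1 x : sub_mul x sub_one = x.
Proof. by apply: sub_eq; rewrite /= gmulg1. Qed.
Lemma sub_mulV x : sub_mul (sub_inv x) x = sub_one.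
Proof. by apply: sub_eq; rewrite /= gmulVg. Qed.
Lemma sub_mulgV x : sub_mul x (sub_inv x) = sub_one.
Proof. by apply: sub_eq; rewrite /= gmulgV. Qed.
Definition sub_group : group :=
  Group sub_mulA sub_mul1 sub_mulg1 sub_mulV sub_mulgV.
End SubGroupAsGroup.

Definition fin_residual (G : group) (x : G) : Prop :=
  forall H : subgroup G, finite_index H -> H x.

(* a letter (i, b): generator x_i if b = false, x_i^{-1} if b = true *)
Definition word (n : nat) := seq ('I_n * bool).
Definition flip n (a : 'I_n * bool) : 'I_n * bool := (a.1, ~~ a.2).
Definition wpow n (u : word n) (m : nat) : word n := flatten (nseq m u).

(* equality in <X | R>: the congruence on words generated by free
   cancellation and the relators; with R = [::] this is equality in F_n *)
Inductive pres_eq (n : nat) (R : seq (word n)) : word n -> word n -> Prop :=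
| pe_refl w : pres_eq R w w
| pe_sym u v : pres_eq R u v -> pres_eq R v u
| pe_trans u v w : pres_eq R u v -> pres_eq R v w -> pres_eq R u w
| pe_cat u u' v v' : pres_eq R u u' -> pres_eq R v v' -> pres_eq R (u ++ v) (u' ++ v')
| pe_cancel a : pres_eq R [:: a; flip a] [::]
| pe_rel r : r \in R -> pres_eq R r [::].

Definition free_eq n := @pres_eq n [::].

Definition not_proper_power n (u : word n) : Prop :=
  forall (v : word n) (k : nat), (2 <= k)%N -> ~ free_eq u (wpow v k).

Definition eval_letter (G : group) n (f : 'I_n -> G) (a : 'I_n * bool) : G :=
  if a.2 then ginv (f a.1) else f a.1.
Definition eval_word (G : group) n (f : 'I_n -> G) (w : word n) : G :=
  foldr (fun a g => gmul (eval_letter f a) g) (gone G) w.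

(* Q = <x_1..x_n | R> is a finite presentation of G via x_i |-> f i :
   phi is onto and its kernel is the normal closure of R *)
Definition presentation (G : group) n (R : seq (word n)) (f : 'I_n -> G) : Prop :=
  (forall g : G, exists w, eval_word f w = g) /\
  (forall w, eval_word f w = gone G <-> pres_eq R w [::]).

Definition finitely_presented (G : group) : Prop :=
  exists n (R : seq (word n)) (f : 'I_n -> G), presentation R f.

Section Deficiencies.
Variable Rl : realType.
Local Open Scope ereal_scope.

(* q = 1/k where k is the order of g R_G in G/R_G (q = 0 if infinite) *)
Definition recip_order (G : group) (g : G) (q : Rl) : Prop :=
  (exists k : nat, [/\ (1 <= k)%N, fin_residual (gexp g k),
     (forall k', (1 <= k')%N -> (k' < k)%N -> ~ fin_residual (gexp g k')) &
     q = (k%:R)^-1]%R)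
  \/ ((forall k, (1 <= k)%N -> ~ fin_residual (gexp g k)) /\ q = 0%R).

(* rdef(Q) = n - sum_i 1/k_i, with relators r_i = u_i^{m_i} in F_n *)
Definition rdef_pres (G : group) n (R : seq (word n)) (f : 'I_n -> G) (x : Rl) : Prop :=
  exists (u : 'I_(size R) -> word n) (q : 'I_(size R) -> Rl),
    (forall i : 'I_(size R), exists m : nat,
       [/\ (1 <= m)%N, free_eq (nth [::] R i) (wpow (u i) m),
           not_proper_power (u i) & recip_order (eval_word f (u i)) (q i)])
    /\ x = (n%:R - \sum_(i < size R) q i)%R.

Definition rdef (G : group) : \bar Rl :=
  ereal_sup [set x%:E | x in [set x : Rl |
    exists n (R : seq (word n)) (f : 'I_n -> G), presentation R f /\ rdef_pres R f x]].

Definition def (K : group) : \bar Rl :=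
  ereal_sup [set x%:E | x in [set x : Rl |
    exists n (R : seq (word n)) (f : 'I_n -> K),
      presentation R f /\ x = (n%:R - (size R)%:R)%R]].

Definition DG (G : group) : \bar Rl :=
  ereal_sup [set x | exists (H : subgroup G) (j : nat),
    index_is H j /\ x = (def (sub_group H) - 1) * ((j%:R)^-1)%:E].
End Deficiencies.

(* Main.v *)
From Pilot Require Import Defs.
From HB Require Import structures.
From mathcomp Require Import all_boot all_order all_algebra all_fingroup.
From mathcomp Require Import classical_sets boolp reals ereal.
From mathcomp Require Import cyclic.
From Stdlib Require Import ClassicalEpsilon.
Import Pilot.Defs.
Set Implicit Arguments. Unset Strict Implicit. Unset Printing Implicit Defensive.

Section GroupBasics.
Variable G : group.
Implicit Types x y z : G.
Local Notation "x * y" := (gmul x y).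
Local Notation "x ^-1" := (ginv x).
Local Notation "1" := (gone G).

Lemma gmulKl x y : x^-1 * (x * y) = y.
Proof. by rewrite gmulA gmulVg gmul1g. Qed.
Lemma gmulKr x y : x * (x^-1 * y) = y.
Proof. by rewrite gmulA gmulgV gmul1g. Qed.
Lemma gmulKl' x y : (y * x) * x^-1 = y.
Proof. by rewrite -gmulA gmulgV gmulg1. Qed.
Lemma gmulKr' x y : (y * x^-1) * x = y.
Proof. by rewrite -gmulA gmulVg gmulg1. Qed.
Lemma ginv_uniq x y : x * y = 1 -> y = x^-1.
Proof. by move=> h; rewrite -(gmulKl x y) h gmulg1. Qed.
Lemma ginvK x : (x^-1)^-1 = x.
Proof. by symmetry; apply: ginv_uniq; rewrite gmulVg. Qed.
Lemma ginvM x y : (x * y)^-1 = y^-1 * x^-1.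
Proof.
by symmetry; apply: ginv_uniq; rewrite -gmulA (gmulA y) gmulgV gmul1g gmulgV.
Qed.
Lemma ginv1 : 1^-1 = 1.
Proof. by symmetry; apply: ginv_uniq; rewrite gmulg1. Qed.
Lemma gmul_cancl x y z : x * y = x * z -> y = z.
Proof. by move=> h; rewrite -(gmulKl x y) h gmulKl. Qed.
End GroupBasics.
Section Words.
Variable n : nat.
Implicit Types (u v w : word n) (R : seq (word n)).

Definition winv w : word n := rev (map (@flip n) w).
Lemma flipK (a : 'I_n * bool) : flip (flip a) = a.
Proof. by case: a => i b; rewrite /flip /= negbK. Qed.
Lemma winv_cat u v : winv (u ++ v) = winv v ++ winv u.
Proof. by rewrite /winv map_cat rev_cat. Qed.
Lemma winv_cons a w : winv (a :: w) = winv w ++ [:: flip a].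
Proof. by rewrite /winv /= rev_cons cats1. Qed.
Lemma winvK w : winv (winv w) = w.
Proof. by rewrite /winv map_rev revK -map_comp (eq_map flipK) map_id. Qed.

Variable R : seq (word n).
Local Notation "u ~ v" := (pres_eq R u v) (at level 70).

Lemma pe_catl u v w : v ~ w -> u ++ v ~ u ++ w.
Proof. by move=> h; apply: pe_cat => //; apply: pe_refl. Qed.
Lemma pe_catr u v w : v ~ w -> v ++ u ~ w ++ u.
Proof. by move=> h; apply: pe_cat => //; apply: pe_refl. Qed.

Lemma pe_winvr w : w ++ winv w ~ [::].
Proof.
elim: w => [|a w IH] /=; first exact: pe_refl.
rewrite winv_cons catA.
apply: (@pe_trans _ _ _ ([:: a] ++ [:: flip a])); last exact: pe_cancel.
rewrite -cat_cons -[a :: w ++ winv w]cat1s.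
apply: pe_catr; rewrite -[X in _ ~ X]cats0; exact: pe_catl.
Qed.
Lemma pe_winvl w : winv w ++ w ~ [::].
Proof. by have := pe_winvr (winv w); rewrite winvK. Qed.

Lemma pe_cancel_l u v : u ++ v ~ u -> v ~ [::].
Proof.
move=> h.
apply: (@pe_trans _ _ _ ((winv u ++ u) ++ v)).
  rewrite -[X in X ~ _]cat0s; apply: pe_catr; apply: pe_sym; exact: pe_winvl.
rewrite -catA; apply: pe_trans (pe_winvl u); exact: pe_catl.
Qed.

Lemma pe_winv u v : u ~ v -> winv u ~ winv v.
Proof.
move=> h.
apply: (@pe_trans _ _ _ (winv u ++ (v ++ winv v))).
  rewrite -[X in X ~ _]cats0; apply: pe_catl; apply: pe_sym; exact: pe_winvr.
rewrite catA; apply: (@pe_trans _ _ _ ([::] ++ winv v)); last exact: pe_refl.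
apply: pe_catr; apply: pe_trans (pe_winvl u); apply: pe_catl; exact: pe_sym.
Qed.

Lemma pe_winv0 u : u ~ [::] -> winv u ~ [::].
Proof. by move/pe_winv. Qed.
End Words.

Lemma pres_eq_sub n (R1 R2 : seq (word n)) u v :
  (forall r, r \in R1 -> pres_eq R2 r [::]) -> pres_eq R1 u v -> pres_eq R2 u v.
Proof.
move=> hR; elim=> {u v}.
- by move=> w; apply: pe_refl.
- by move=> u v _ h; apply: pe_sym.
- by move=> u v w _ h1 _ h2; apply: pe_trans h2.
- by move=> u u' v v' _ h1 _ h2; apply: pe_cat.
- by move=> a; apply: pe_cancel.
- by move=> r /hR.
Qed.

Lemma wpow_add n (u : word n) a b : wpow u (a + b) = wpow u a ++ wpow u b.
Proof. by rewrite /wpow nseqD flatten_cat. Qed.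

Section Eval.
Variables (G : group) (n : nat) (f : 'I_n -> G).
Local Notation ev := (eval_word f).
Lemma eval_cat u v : ev (u ++ v) = gmul (ev u) (ev v).
Proof. by elim: u => [|a u IH] /=; rewrite ?gmul1g // IH gmulA. Qed.
Lemma eval_flip a : eval_letter f (flip a) = ginv (eval_letter f a).
Proof. by case: a => i [] /=; rewrite /eval_letter /= ?ginvK. Qed.
Lemma eval_winv w : ev (winv w) = ginv (ev w).
Proof.
elim: w => [|a w IH] /=; first by rewrite ginv1.
by rewrite winv_cons eval_cat IH /= eval_flip gmulg1 ginvM.
Qed.
Lemma eval_sound (R : seq (word n)) u v :
  (forall r, r \in R -> ev r = gone G) -> pres_eq R u v -> ev u = ev v.
Proof.
move=> hR; elim=> {u v}.
- by [].
- by move=> u v _ ->.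
- by move=> u v w _ -> _ ->.
- by move=> u u' v v' _ h1 _ h2; rewrite !eval_cat h1 h2.
- by move=> a /=; rewrite eval_flip gmulg1 gmulgV.
- by move=> r /hR.
Qed.
End Eval.
Lemma proj_eval (G : group) (H : subgroup G) m (g : 'I_m -> sub_group H) (w : word m) :
  proj1_sig (eval_word g w) = eval_word (fun k => proj1_sig (g k)) w.
Proof.
elim: w => [|[k b] w IH] //=; rewrite -IH /eval_letter /=.
by case: b.
Qed.

Section RS.
Variables (G : group) (gT : finGroupType) (rho : G -> gT).
Hypothesis rhoM : forall x y, rho (gmul x y) = (rho x * rho y)%g.
Hypothesis rho_surj : forall z : gT, exists x, rho x = z.
Variables (n : nat) (f : 'I_n -> G) (P : seq (word n * nat)).
Let R := [seq wpow p.1 p.2 | p <- P].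
Hypothesis pres : presentation R f.

Local Open Scope group_scope.

Lemma rho1 : rho (gone G) = 1.
Proof.
by apply: (mulgI (rho (gone G))); rewrite -rhoM gmul1g mulg1.
Qed.
Lemma rhoV x : rho (ginv x) = (rho x)^-1.
Proof. by apply: (mulgI (rho x)); rewrite -rhoM gmulgV rho1 mulgV. Qed.

Definition rw (w : word n) := rho (eval_word f w).
Definition xi (i : 'I_n) := rho (f i).
Definition rl (a : 'I_n * bool) := rho (eval_letter f a).
Lemma rlE i b : rl (i, b) = if b then (xi i)^-1 else xi i.
Proof. by rewrite /rl /eval_letter /=; case: b => //; rewrite rhoV. Qed.
Lemma rw_nil : rw [::] = 1. Proof. exact: rho1. Qed.
Lemma rw_cons a w : rw (a :: w) = rl a * rw w.
Proof. by rewrite /rw /= rhoM. Qed.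
Lemma rw_cat u v : rw (u ++ v) = rw u * rw v.
Proof. by rewrite /rw eval_cat rhoM. Qed.
Lemma rw_winv w : rw (winv w) = (rw w)^-1.
Proof. by rewrite /rw eval_winv rhoV. Qed.
Lemma rw_wpow u t : rw (wpow u t) = (rw u) ^+ t.
Proof.
elim: t => [|t IH]; first by rewrite /wpow /= rw_nil.
by rewrite /wpow /= rw_cat -/(wpow u t) IH expgS.
Qed.

Lemma R_eval r : r \in R -> eval_word f r = gone G.
Proof. by move=> hr; apply/(proj2 pres r); apply: pe_rel. Qed.

Lemma kone : rho (gone G) = 1. Proof. exact: rho1. Qed.
Lemma kmul x y : rho x = 1 -> rho y = 1 -> rho (gmul x y) = 1.
Proof. by move=> hx hy; rewrite rhoM hx hy mulg1. Qed.
Lemma kinv x : rho x = 1 -> rho (ginv x) = 1.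
Proof. by move=> hx; rewrite rhoV hx invg1. Qed.
Definition N : subgroup G := @Subgroup G (fun x => rho x = 1) kone kmul kinv.

Lemma rw_surj z : exists w, rw w = z.
Proof.
have [x <-] := rho_surj z; have [w hw] := proj1 pres x.
by exists w; rewrite /rw hw.
Qed.
Definition s (z : gT) : word n :=
  if z == 1 then [::] else epsilon (inhabits [::]) (fun w => rw w = z).
Lemma rw_s z : rw (s z) = z.
Proof.
rewrite /s; case: eqP => [->|_]; first exact: rw_nil.
by apply: (epsilon_spec (inhabits [::]) (fun w => rw w = z)); apply: rw_surj.
Qed.
Lemma s1 : s 1 = [::].
Proof. by rewrite /s eqxx. Qed.
Definition S z := eval_word f (s z).
Lemma S1 : S 1 = gone G. Proof. by rewrite /S s1. Qed.
Lemma rhoS z : rho (S z) = z. Proof. exact: rw_s. Qed.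

Definition mY := #|{: gT * 'I_n}|.
Definition gen (z : gT) (i : 'I_n) : 'I_mY := enum_rank (z, i).
Definition tl (z : gT) (a : 'I_n * bool) : 'I_mY * bool :=
  if a.2 then (gen (z * (xi a.1)^-1) a.1, true) else (gen z a.1, false).
Fixpoint tau (z : gT) (w : word n) : word mY :=
  if w is a :: w' then tl z a :: tau (z * rl a) w' else [::].

Lemma tau_cat z u v : tau z (u ++ v) = tau z u ++ tau (z * rw u) v.
Proof.
elim: u z => [|a u IH] z /=; first by rewrite rw_nil mulg1.
by rewrite IH rw_cons mulgA.
Qed.

Local Notation "x *g y" := (gmul x y) (at level 40, left associativity).
Definition yval (z : gT) (i : 'I_n) := S z *g f i *g ginv (S (z * xi i)).
Lemma yval_in z i : rho (yval z i) = 1.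
Proof. by rewrite /yval !rhoM rhoV !rhoS /xi mulgV. Qed.
Definition yv (k : 'I_mY) := yval (enum_val k).1 (enum_val k).2.
Definition fN (k : 'I_mY) : sub_group N := exist _ (yv k) (yval_in _ _).
Local Notation Ev := (eval_word (fun k => proj1_sig (fN k))).
Local Notation ev := (eval_word f).

Lemma yv_gen z i : yv (gen z i) = yval z i.
Proof. by rewrite /yv /gen enum_rankK. Qed.

Lemma tl_eval z a :
  eval_letter (fun k => proj1_sig (fN k)) (tl z a) =
  S z *g eval_letter f a *g ginv (S (z * rl a)).
Proof.
case: a => i [] /=; rewrite /tl /eval_letter /= yv_gen /yval rlE //.
by rewrite !ginvM !ginvK mulgKV gmulA.
Qed.

Lemma tau_eval z w : Ev (tau z w) = S z *g ev w *g ginv (S (z * rw w)).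
Proof.
elim: w z => [|a w IH] z /=.
  by rewrite rw_nil mulg1 gmulg1 gmulgV.
rewrite tl_eval IH rw_cons mulgA.
rewrite !gmulA; congr (_ *g _); rewrite -!gmulA; congr (_ *g _); congr (_ *g _).
by rewrite !gmulA gmulVg gmul1g.
Qed.

Lemma tl_flip y a : tl (y * rl a) (flip a) = flip (tl y a).
Proof.
case: a => i [] ; rewrite rlE /tl /flip //=.
by rewrite mulgK.
Qed.

Lemma tau_winv y w : tau (y * rw w) (winv w) = winv (tau y w).
Proof.
elim: w y => [|a w IH] y /=; first by [].
rewrite winv_cons winv_cons tau_cat rw_cons mulgA IH rw_winv.
by rewrite mulgK /= tl_flip.
Qed.

Definition transR := [seq tau 1 (s z) | z <- [seq z <- enum gT | z != 1]].
Definition reps (g : gT) := [seq repr X | X <- enum (lcosets <[g]> [set: gT])].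
Definition cycR :=
  flatten [seq [seq tau y (wpow p.1 p.2) | y <- reps (rw p.1)] | p <- P].
Definition RY := transR ++ cycR.
Local Notation "u ~ v" := (pres_eq RY u v) (at level 70).

Lemma trans_rel z : tau 1 (s z) ~ [::].
Proof.
case: (eqVneq z 1) => [->|nz]; first by rewrite s1; apply: pe_refl.
apply: pe_rel; rewrite mem_cat; apply/orP; left.
by apply: map_f; rewrite mem_filter nz mem_enum.
Qed.

Lemma cyc_rel p z : p \in P -> tau z (wpow p.1 p.2) ~ [::].
Proof.
move=> hp; set u := p.1; set m := p.2; set g := rw u.
set y := repr (z *: <[g]>).
have yin : y \in z *: <[g]> by apply: mem_repr (lcoset_refl _ _).
have yrel : tau y (wpow u m) ~ [::].
  apply: pe_rel; rewrite mem_cat; apply/orP; right.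
  apply/flattenP; exists [seq tau y (wpow p.1 p.2) | y <- reps (rw p.1)].
    by apply: map_f.
  apply: map_f; apply: map_f; rewrite mem_enum mem_lcosets.
  by rewrite -[z]mulg1 mem_mulg ?inE ?group1.
have [t ht] : exists t, z = y * g ^+ t.
  have : y^-1 * z \in <[g]>.
    by rewrite -groupV invMg invgK -mem_lcoset.
  by case/cycleP => t ht; exists t; rewrite -ht mulKVg.
have gm : rw (wpow u m) = 1.
  rewrite /rw R_eval ?rho1 //; exact: map_f.
have e1 := tau_cat y (wpow u t) (wpow u m).
have e2 := tau_cat y (wpow u m) (wpow u t).
rewrite -wpow_add in e1; rewrite -wpow_add in e2.
rewrite (addnC t m) rw_wpow -ht in e1.
apply: (@pe_cancel_l _ _ (tau y (wpow u t))).
rewrite -e1 e2 gm mulg1.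
rewrite -[X in _ ~ X]cat0s; apply: pe_catr; exact: yrel.
Qed.

Lemma R_sound u v : pres_eq R u v -> rw u = rw v.
Proof. by move=> h; rewrite /rw (eval_sound (fun r hr => R_eval hr) h). Qed.

Lemma transfer u v : pres_eq R u v -> forall z, tau z u ~ tau z v.
Proof.
elim=> {u v}.
- by move=> w z; apply: pe_refl.
- by move=> u v _ h z; apply: pe_sym.
- by move=> u v w _ h1 _ h2 z; apply: pe_trans (h2 z).
- move=> u u' v v' h h1 _ h2 z; rewrite !tau_cat (R_sound h).
  by apply: pe_cat.
- move=> a z /=; rewrite tl_flip; exact: pe_cancel.
- by move=> r /mapP [p hp ->] z; apply: cyc_rel.
Qed.

Definition eletter0 (k : 'I_mY) : word n :=
  s (enum_val k).1 ++ [:: ((enum_val k).2, false)] ++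
    winv (s ((enum_val k).1 * xi (enum_val k).2)).
Definition eletter (a : 'I_mY * bool) : word n :=
  if a.2 then winv (eletter0 a.1) else eletter0 a.1.
Definition ew (w : word mY) : word n := flatten (map eletter w).

Lemma ev_eletter a : ev (eletter a) = eval_letter (fun k => proj1_sig (fN k)) a.
Proof.
have e0 : forall k, ev (eletter0 k) = yv k.
  by move=> k; rewrite /eletter0 !eval_cat eval_winv /= gmulg1 gmulA.
case: a => k [] /=; rewrite /eletter /eval_letter /=.
  by rewrite eval_winv e0.
exact: e0.
Qed.

Lemma ev_ew w : ev (ew w) = Ev w.
Proof.
elim: w => [|a w IH] //=; by rewrite eval_cat IH ev_eletter.
Qed.

Lemma rw_eletter a : rw (eletter a) = 1.
Proof.
rewrite /rw ev_eletter; case: a => k [] /=; rewrite /eval_letter /=.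
  by rewrite rhoV yval_in invg1.
exact: yval_in.
Qed.

Lemma eletter0_rel k : tau 1 (eletter0 k) ~ [:: (k, false)].
Proof.
rewrite /eletter0; set z := (enum_val k).1; set i := (enum_val k).2.
rewrite tau_cat rw_s mul1g tau_cat /=.
have -> : tl z (i, false) = (k, false).
  by rewrite /tl /= /gen /z /i -surjective_pairing enum_valK.
rewrite rw_cons rw_nil mulg1 rlE /=.
have := tau_winv 1 (s (z * xi i)); rewrite rw_s mul1g => ->.
apply: (@pe_trans _ _ _ ([::] ++ [:: (k, false)] ++ [::])); last by apply: pe_refl.
apply: pe_cat; first exact: trans_rel.
rewrite -cat1s; apply: pe_catl; apply: pe_winv0; exact: trans_rel.
Qed.

Lemma eletter_rel a : tau 1 (eletter a) ~ [:: a].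
Proof.
case: a => k [] /=; last exact: eletter0_rel.
have h1 : rw (eletter0 k) = 1 by exact: (rw_eletter (k, false)).
rewrite /eletter /= -[X in tau X _](mulg1 1) -[X in tau (1 * X) _]h1 tau_winv.
have -> : [:: (k, true)] = winv [:: (k, false)] by [].
apply: pe_winv; exact: eletter0_rel.
Qed.

Lemma ew_rel w : tau 1 (ew w) ~ w.
Proof.
elim: w => [|a w IH] /=; first exact: pe_refl.
rewrite tau_cat rw_eletter mulg1 -cat1s; apply: pe_cat => //.
exact: eletter_rel.
Qed.

Lemma RY_eval r : r \in RY -> Ev r = gone G.
Proof.
rewrite mem_cat => /orP [/mapP [z _ ->] | /flattenP [rs /mapP [p hp ->] /mapP [y _ ->]]].
  by rewrite tau_eval rw_s mul1g S1 gmul1g gmulgV.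
rewrite tau_eval /rw R_eval ?rho1 ?mulg1 ?gmulg1 ?gmulgV //; exact: map_f.
Qed.

Lemma RS_pres : presentation RY fN.
Proof.
split.
  move=> h; have [w hw] := proj1 pres (proj1_sig h).
  exists (tau 1 w); apply: sub_eq; rewrite proj_eval tau_eval S1 gmul1g.
  have -> : rw w = 1 by rewrite /rw hw; exact: (proj2_sig h).
  by rewrite mulg1 S1 ginv1 gmulg1.
move=> w; split.
  move=> h.
  have e : ev (ew w) = gone G by rewrite ev_ew -proj_eval h.
  have := transfer (proj1 (proj2 pres _) e) 1 => /= h2.
  exact: pe_trans (pe_sym (ew_rel w)) h2.
move=> h; have := eval_sound (G := sub_group N) (f := fN) _ h.
apply=> r hr; apply: sub_eq; rewrite proj_eval; exact: RY_eval.
Qed.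

Lemma RS_index : index_is N #|gT|.
Proof.
exists (fun k => S (enum_val k)) => x; exists (enum_rank (rho x)); split.
  by rewrite /= rhoM rhoV rhoS enum_rankK mulVg.
move=> k /= h; rewrite rhoM rhoV rhoS in h.
apply: enum_val_inj; rewrite enum_rankK; apply/eqP; rewrite eq_sym eq_mulVg1; exact/eqP.
Qed.

Lemma size_transR : size transR = #|gT|.-1.
Proof.
rewrite size_map size_filter -(cardC1 (1 : gT)) cardE -size_filter enumT /enum_mem.
by [].
Qed.

Lemma size_cycR :
  size cycR = (\sum_(p <- P) #|[set: gT] : <[rw p.1]>|)%N.
Proof.
rewrite /cycR; elim: P => [|p Q IH]; first by rewrite big_nil.
rewrite /= size_cat IH big_cons size_map size_map -cardE card_lcosets //.
Qed.

Lemma size_RY :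
  size RY = (#|gT|.-1 + \sum_(p <- P) #|[set: gT] : <[rw p.1]>|)%N.
Proof. by rewrite size_cat size_transR size_cycR. Qed.

Lemma mY_card : mY = (#|gT| * n)%N.
Proof. by rewrite /mY card_prod card_ord. Qed.

End RS.

Local Notation "x *g y" := (gmul x y) (at level 40, left associativity).

Section KerFI.
Variables (G : group) (gT : finGroupType) (rho : G -> gT).
Hypothesis rhoM : forall x y, rho (gmul x y) = (rho x * rho y)%g.
Local Open Scope group_scope.

Definition img : {set gT} := finset (fun y => `[< exists x, rho x = y >]).
Lemma img_rho x : rho x \in img.
Proof. by rewrite /img finset.in_set; apply/asboolP; exists x. Qed.

Lemma ker_fi : finite_index (N rhoM).
Proof.
exists #|img|.
pose pre (y : gT) := epsilon (inhabits (gone G)) (fun x => rho x = y).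
have preP (k : 'I_#|img|) : rho (pre (enum_val k)) = enum_val k.
  apply: (epsilon_spec (inhabits (gone G)) (fun x => rho x = enum_val k)).
  by have : enum_val k \in img := enum_valP k; rewrite /img finset.in_set => /asboolP.
exists (fun k => pre (enum_val k)) => x.
have hx := img_rho x.
exists (enum_rank_in hx (rho x)); split.
  by rewrite /= rhoM (rhoV rhoM) preP enum_rankK_in // mulVg.
move=> k /= h; rewrite rhoM (rhoV rhoM) preP in h.
have e : enum_val k = rho x by apply/eqP; rewrite eq_mulVg1; exact/eqP.
by rewrite -(enum_valK_in hx k) e.
Qed.
End KerFI.

Section ActPerm.
Variables (G : group) (T : finType) (act : T -> G -> T).
Hypothesis act1 : forall t, act t (gone G) = t.
Hypothesis actM : forall t g h, act (act t g) h = act t (gmul g h).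
Lemma act_inj g : injective (act^~ g).
Proof.
move=> t1 t2 /(congr1 (act^~ (ginv g))) /=.
by rewrite !actM gmulgV !act1.
Qed.
Definition aperm g : {perm T} := perm (@act_inj g).
Lemma apermM g h : aperm (gmul g h) = (aperm g * aperm h)%g.
Proof. by apply/permP => t; rewrite permM !permE actM. Qed.
Lemma aperm1P g : aperm g = 1%g <-> forall t, act t g = t.
Proof.
split=> [h t | h]; last by apply/permP => t; rewrite permE perm1 h.
by have := congr1 (fun p : {perm T} => p t) h; rewrite /= permE perm1.
Qed.
End ActPerm.

Section CosetAction.
Variables (G : group) (H : subgroup G) (j : nat) (r : 'I_j -> G).
Hypothesis hr : forall x, exists! i, H (ginv (r i) *g x).
Lemma exu_ex x : exists i, H (ginv (r i) *g x).
Proof. by have [i [hi _]] := hr x; exists i. Qed.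
Definition cos x : 'I_j :=
  proj1_sig (constructive_indefinite_description _
    (exu_ex x)) .
Lemma cos_spec x : H (ginv (r (cos x)) *g x).
Proof. rewrite /cos; case: (constructive_indefinite_description _ _) => i hi /=; exact: hi. Qed.
Lemma cos_uniq x i : H (ginv (r i) *g x) -> i = cos x.
Proof.
move=> h; have [i0 [_ u]] := hr x.
by rewrite -(u _ h) -(u _ (cos_spec x)).
Qed.
Lemma cos_eq x y : H (ginv x *g y) -> cos x = cos y.
Proof.
move=> h; apply: cos_uniq.
by rewrite -(gmulKr x y) gmulA; apply: sg_mul => //; apply: cos_spec.
Qed.
Lemma cos_eq_inv x y : cos x = cos y -> H (ginv x *g y).
Proof.
move=> e; have h1 := cos_spec x; have h2 := cos_spec y; rewrite e in h1.
have := sg_mul (sg_inv h1) h2; by rewrite ginvM ginvK -gmulA gmulKr.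
Qed.
Definition ract (i : 'I_j) (g : G) := cos (ginv g *g r i).
Lemma ract1 i : ract i (gone G) = i.
Proof.
rewrite /ract ginv1 gmul1g; symmetry; apply: cos_uniq.
by rewrite gmulVg; apply: sg_one.
Qed.
Lemma ractM i g h : ract (ract i g) h = ract i (g *g h).
Proof.
rewrite /ract; apply: cos_eq.
have := cos_spec (ginv g *g r i).
by rewrite ginvM ginvM ginvK !gmulA gmulKl' -!gmulA.
Qed.
Lemma ract_ker x : (forall i, ract i x = i) -> H x.
Proof.
move=> h; set i0 := cos (gone G).
have h1 : H (ginv (r i0)) by have := cos_spec (gone G); rewrite gmulg1.
have h2 : H (ginv (r i0) *g (ginv x *g r i0)).
  have := h i0; rewrite /ract => e; have := cos_spec (ginv x *g r i0).
  by rewrite e.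
have h3 : H (ginv x).
  have := sg_mul (sg_mul (sg_inv h1) h2) h1.
  by rewrite ginvK gmulKr gmulKl'.
by have := sg_inv h3; rewrite ginvK.
Qed.
End CosetAction.

Definition is_action (G : group) (T : finType) (act : T -> G -> T) :=
  (forall t, act t (gone G) = t) /\
  (forall t g h, act (act t g) h = act t (gmul g h)) /\
  (forall y, fin_residual y -> forall t, act t y = t).

Lemma sep_one (G : group) (x : G) : ~ fin_residual x ->
  exists (T : finType) (act : T -> G -> T), is_action act /\ exists t, act t x <> t.
Proof.
move=> hx.
have [H [[j [r hr]] nHx]] : exists H : subgroup G, finite_index H /\ ~ H x.
  apply: NNPP => hn; apply: hx => H hH.
  by apply: NNPP => nH; apply: hn; exists H.
exists 'I_j, (ract hr); split; last first.
  apply: NNPP => hn; apply: nHx; apply: (@ract_ker _ H j r hr x) => i.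
  by apply: NNPP => ne; apply: hn; exists i.
split; first exact: ract1.
split; first exact: ractM.
move=> y hy t.
have hM := apermM (ract1 hr) (ractM hr).
have := hy _ (ker_fi hM) => /= /(aperm1P (ract1 hr) (ractM hr)).
exact.
Qed.

Lemma sep_list (G : group) (xs : seq G) :
  (forall x, List.In x xs -> ~ fin_residual x) ->
  exists (T : finType) (act : T -> G -> T), is_action act /\
    forall x, List.In x xs -> exists t, act t x <> t.
Proof.
elim: xs => [|x xs IH] hxs.
  exists unit, (fun t _ => t); split; last by [].
  by split=> //; split.
have [T1 [a1 [[h11 [h12 h13]] s1]]] := sep_one (hxs x (or_introl erefl)).
have [T2 [a2 [[h21 [h22 h23]] s2]]] := IH (fun y hy => hxs y (or_intror hy)).
pose a (t : T1 + T2) g : T1 + T2 :=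
  match t with inl t1 => inl (a1 t1 g) | inr t2 => inr (a2 t2 g) end.
exists (T1 + T2)%type, a; split.
  split; first by case=> t /=; rewrite ?h11 ?h21.
  split; first by case=> t g h /=; rewrite ?h12 ?h22.
  by move=> y hy [t|t] /=; rewrite ?h13 ?h23.
move=> y [<-|hy].
  by have [t ht] := s1; exists (inl t) => /= [[]].
by have [t ht] := s2 y hy; exists (inr t) => /= [[]].
Qed.

Lemma sep_hom (G : group) (xs : seq G) :
  (forall x, List.In x xs -> ~ fin_residual x) ->
  exists (gT : finGroupType) (rho : G -> gT),
    [/\ (forall x y, rho (gmul x y) = (rho x * rho y)%g),
        (forall z, exists x, rho x = z),
        (forall y, fin_residual y -> rho y = 1%g) &
        (forall x, List.In x xs -> rho x <> 1%g)].
Proof.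
move=> /sep_list [T [act [[a1 [aM ak]] asep]]].
pose ap := aperm a1 aM.
have apM : forall x y, ap (gmul x y) = (ap x * ap y)%g := apermM a1 aM.
pose K := img ap.
have gK : group_set K.
  apply/group_setP; split.
    have e1 : ap (gone G) = 1%g by apply/(aperm1P a1 aM) => t; exact: a1 t.
    by rewrite -e1; exact: img_rho.
  move=> u v; rewrite /K /img !finset.in_set => /asboolP [x <-] /asboolP [y <-].
  by apply/asboolP; exists (gmul x y); rewrite apM.
pose Kg := fingroup.Group gK.
have inK x : ap x \in Kg by exact: img_rho.
exists (subg_of Kg), (fun x => subg Kg (ap x)); split.
- by move=> x y; rewrite apM subgM.
- move=> z; have := subgP z; rewrite /= /K /img finset.in_set => /asboolP [x hx].
  by exists x; rewrite hx sgvalK.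
- move=> y hy; apply: val_inj; rewrite /= subgK //.
  by apply/(aperm1P a1 aM); apply: ak.
- move=> x hx e; have [t ht] := asep x hx; apply: ht.
  have : val (subg Kg (ap x)) = val (1%g : subg_of Kg) by rewrite e.
  rewrite subgK // => /(aperm1P a1 aM); exact.
Qed.

Lemma In_mapP (A B : Type) (F : A -> B) (l : seq A) y :
  List.In y (map F l) -> exists a, List.In a l /\ y = F a.
Proof.
elim: l => [|a l IH] //= [<-|h]; first by exists a; split; [left|].
by have [b [hb ->]] := IH h; exists b; split; [right|].
Qed.
Lemma In_map (A B : Type) (F : A -> B) (l : seq A) a :
  List.In a l -> List.In (F a) (map F l).
Proof. elim: l => [|b l IH] //= [->|h]; [by left|right; exact: IH]. Qed.
Lemma In_mem (T : eqType) (x : T) (l : seq T) : List.In x l -> x \in l.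
Proof.
elim: l => [|a l IH] //= [e|h]; rewrite inE; apply/orP; [left; rewrite e|right; exact: IH].
by [].
Qed.
Lemma mem_In (T : eqType) (x : T) (l : seq T) : x \in l -> List.In x l.
Proof.
elim: l => [|a l IH] //=; rewrite inE => /orP [/eqP ->|h]; [by left|right; exact: IH].
Qed.
Lemma In_flattenP (A I : Type) (F : I -> seq A) (l : seq I) y :
  List.In y (flatten (map F l)) -> exists i, List.In i l /\ List.In y (F i).
Proof.
elim: l => [|i l IH] //= /List.in_app_iff [h|h].
  by exists i; split; [left|].
by have [k [hk hy]] := IH h; exists k; split; [right|].
Qed.
Lemma In_flatten (A I : Type) (F : I -> seq A) (l : seq I) i y :
  List.In i l -> List.In y (F i) -> List.In y (flatten (map F l)).
Proof.
elim: l => [|k l IH] //= [<-|h] hy; apply/List.in_app_iff; [left|right] => //.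
exact: IH.
Qed.

Lemma rho_gexp (G : group) (gT : finGroupType) (rho : G -> gT)
  (rhoM : forall x y, rho (gmul x y) = (rho x * rho y)%g) g d :
  rho (gexp g d) = (rho g ^+ d)%g.
Proof.
elim: d => [|d IH] /=; first exact: rho1 rhoM.
by rewrite rhoM IH expgS.
Qed.

Import Order.TTheory GRing.Theory Num.Theory.
Section Bound.
Variable Rl : realType.
Local Open Scope ring_scope.

Lemma bound_i (G : group) (g : G) (q : Rl) (M : nat) : (0 < M)%N ->
  recip_order g q -> exists xs : seq G,
    (forall y, List.In y xs -> ~ fin_residual y) /\
    forall (gT : finGroupType) (rho : G -> gT),
      (forall x y, rho (gmul x y) = (rho x * rho y)%g) ->
      (forall y, fin_residual y -> rho y = 1%g) ->
      (forall y, List.In y xs -> rho y <> 1%g) ->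
      (#[rho g]%g%:R)^-1 <= q + (M%:R)^-1.
Proof.
move=> M0 [[k [k1 hk hlt ->]] | [hinf ->]].
- exists [seq gexp g d | d <- iota 1 k.-1]; split.
    move=> y hy; have [d [hd ->]] := In_mapP hy.
    move/In_mem: hd; rewrite mem_iota add1n prednK // => /andP [d1 dk].
    exact: hlt.
  move=> gT rho rhoM hker hsep.
  have ok : #[rho g]%g = k.
    have hdvd : (#[rho g] %| k)%g%N by rewrite order_dvdn -rho_gexp // hker //.
    apply/eqP; rewrite eqn_leq dvdn_leq //=.
    rewrite leqNgt; apply/negP => lt.
    have o0 := order_gt0 (rho g).
    apply: (hsep (gexp g #[rho g]%g)); last by rewrite rho_gexp // expg_order.
    apply: In_map; apply: mem_In; rewrite mem_iota add1n prednK // o0 lt.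
    by [].
  by rewrite ok lerDl invr_ge0 ler0n.
- exists [seq gexp g d | d <- iota 1 M.-1]; split.
    move=> y hy; have [d [hd ->]] := In_mapP hy.
    move/In_mem: hd; rewrite mem_iota add1n prednK // => /andP [d1 dk].
    exact: hinf.
  move=> gT rho rhoM hker hsep.
  have o0 := order_gt0 (rho g).
  have ok : (M <= #[rho g]%g)%N.
    rewrite leqNgt; apply/negP => lt.
    apply: (hsep (gexp g #[rho g]%g)); last by rewrite rho_gexp // expg_order.
    apply: In_map; apply: mem_In; rewrite mem_iota add1n prednK // o0 lt.
    by [].
  rewrite add0r lef_pV2 ?ler_nat // posrE ltr0n //.
Qed.
End Bound.

Lemma free_pres n (R : seq (word n)) a b : free_eq a b -> pres_eq R a b.
Proof. by apply: pres_eq_sub => r; rewrite in_nil. Qed.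

Lemma pres_replace (G : group) n (R : seq (word n)) (f : 'I_n -> G)
  (u : 'I_(size R) -> word n) (m : 'I_(size R) -> nat) :
  presentation R f -> (forall i : 'I_(size R), free_eq (nth [::] R i) (wpow (u i) (m i))) ->
  presentation [seq wpow p.1 p.2 | p <- map (fun i : 'I_(size R) => (u i, m i)) (enum 'I_(size R))] f.
Proof.
move=> [hs hk] hu; split => // w; rewrite hk; split.
  apply: pres_eq_sub => r hr.
  have hi : (index r R < size R)%N by rewrite index_mem.
  have e : nth [::] R (Ordinal hi) = r by rewrite /= nth_index.
  rewrite -e; have := free_pres _ (hu (Ordinal hi)).
  move=> h; apply: pe_trans (h _) _.
  apply: pe_rel; rewrite -map_comp; apply/mapP; exists (Ordinal hi) => //.
  by rewrite mem_enum.
apply: pres_eq_sub => r /mapP [p /mapP [i _ ->] ->] /=.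
apply: pe_trans (pe_sym (free_pres _ (hu i))) _.
by apply: pe_rel; apply: mem_nth.
Qed.

From mathcomp Require Import ring lra.
Section Core.
Variable Rl : realType.
Local Open Scope ring_scope.

Lemma core (G : group) n (R : seq (word n)) (f : 'I_n -> G) (x e : Rl) :
  presentation R f -> rdef_pres R f x -> 0 < e ->
  exists (H : subgroup G) (j : nat), index_is H j /\
    ((x - 1 - e)%:E <= (def Rl (sub_group H) - 1) * ((j%:R)^-1)%:E)%E.
Proof.
move=> pres [u [q [hu ->]]] e0.
set s := size R.
have [m hm] := fin_all_exists hu.
pose M := (Num.Def.trunc (s%:R / e)).+1.
have M0 : (0 < M)%N by [].
have hM : s%:R / M%:R <= e.
  have := truncnS_gt (s%:R / e); rewrite -/M => h.
  rewrite ler_pdivrMr ?ltr0n // mulrC -ler_pdivrMr //; exact: ltW.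
pose Q (i : 'I_s) (xs : seq G) :=
    (forall y, List.In y xs -> ~ fin_residual y) /\
    forall (gT : finGroupType) (rho : G -> gT),
      (forall x y, rho (gmul x y) = (rho x * rho y)%g) ->
      (forall y, fin_residual y -> rho y = 1%g) ->
      (forall y, List.In y xs -> rho y <> 1%g) ->
      (#[rho (eval_word f (u i))]%g%:R)^-1 <= q i + (M%:R)^-1.
have hQ : forall i, exists xs, Q i xs.
  move=> i; have [_ _ _ hr] := hm i.
  exact: bound_i M0 hr.
have [xsf hxs] := fin_all_exists hQ.
pose xs := flatten (map xsf (enum 'I_s)).
have [gT [rho [rhoM rsurj rker rsep]]] : exists (gT : finGroupType) (rho : G -> gT),
    [/\ (forall x y, rho (gmul x y) = (rho x * rho y)%g),
        (forall z, exists x, rho x = z),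
        (forall y, fin_residual y -> rho y = 1%g) &
        (forall x, List.In x xs -> rho x <> 1%g)].
  apply: sep_hom => y hy0; have [i [_ hy]] := In_flattenP hy0; exact: (proj1 (hxs i)) hy.
have hq i : (#[rho (eval_word f (u i))]%g%:R)^-1 <= q i + (M%:R)^-1.
  apply: (proj2 (hxs i)) => // y hy; apply: rsep.
  by apply: In_flatten hy; apply: mem_In; rewrite mem_enum.
have pres' := pres_replace pres (fun i => let: And4 _ h _ _ := hm i in h).
have hp := RS_pres rhoM rsurj pres'.
have hidx := RS_index rhoM rsurj pres'.
have hsz := size_RY rho f (map (fun i : 'I_(size R) => (u i, m i)) (enum 'I_(size R))).
have hmY := mY_card gT n.
exists (N rhoM), #|gT|; split => //.
set P' := map _ _ in hsz.
set j := #|gT| in hsz hmY *.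
have j0 : (0 < j)%N by apply/card_gt0P; exists 1%g.
pose o i := #[rho (eval_word f (u i))]%g.
have o0 i : (0 < o i)%N by exact: order_gt0.
have hsum : ((\sum_(p <- P') #|[set: gT] : <[rw rho f p.1]>|%g)%N%:R : Rl)
    = \sum_(i < s) j%:R / (o i)%:R.
  rewrite natr_sum big_map big_enum /=; apply: eq_bigr => i _.
  have L := Lagrange (finset.subsetT <[rw rho f (u i)]>%g); rewrite cardsT in L.
  rewrite /j -L natrM.
  have -> : o i = #|<[rw rho f (u i)]>%G| by [].
  rewrite [X in X / _]mulrC mulfK //.
  by rewrite pnatr_eq0 -lt0n; exact: order_gt0.
pose S : Rl := \sum_(i < s) ((o i)%:R)^-1.
have hS : S <= \sum_(i < s) q i + s%:R / M%:R.
  apply: (@le_trans _ _ (\sum_(i < s) (q i + (M%:R)^-1))).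
    by apply: ler_sum => i _; exact: hq.
  by rewrite big_split /= sumr_const card_ord mulr_natl.
have hj1 : ((j.-1)%:R : Rl) = j%:R - 1.
  by rewrite -[in RHS](prednK j0) -addn1 natrD addrK.
have hjS : \sum_(i < s) (j%:R : Rl) / (o i)%:R = j%:R * S.
  by rewrite /S mulr_sumr.
pose v : Rl := (mY gT n)%:R - (size (RY rho f P'))%:R.
have hdef : (v%:E <= def Rl (sub_group (N rhoM)))%E.
  apply: ereal_sup_ubound; exists v => //.
  by exists (mY gT n), (RY rho f P'), (fN rhoM rsurj pres').
have hv : v = (j * n)%N%:R - ((j.-1)%:R + j%:R * S).
  have e1 : ((mY gT n)%:R : Rl) = (j * n)%N%:R by rewrite hmY.
  by rewrite /v e1 hsz natrD hsum hjS.
have jn0 : (j%:R : Rl) != 0 by rewrite pnatr_eq0 -lt0n.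
apply: (@le_trans _ _ (((v - 1) * (j%:R)^-1)%:E)).
  rewrite lee_fin hv hj1 natrM.
  have -> : ((j%:R * n%:R - (j%:R - 1 + j%:R * S) - 1) / j%:R : Rl) = n%:R - 1 - S.
    by field.
  lra.
rewrite EFinM; apply: lee_wpmul2r; first by rewrite lee_fin invr_ge0 ler0n.
rewrite EFinB; apply: leeB hdef _; exact: le_refl.
Qed.
End Core.

Section Main.
Variable Rl : realType.
Local Open Scope ereal_scope.

Lemma key (G : group) (x : Rl) :
  (exists n (R : seq (word n)) (f : 'I_n -> G), presentation R f /\ rdef_pres R f x) ->
  (x - 1)%:E <= DG Rl G.
Proof.
move=> [n [R [f [pres hr]]]].
apply/lee_addgt0Pr => e e0.
have [H [j [hj hle]]] := core pres hr e0.
have : (x - 1 - e)%:E <= DG Rl G.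
  apply: le_trans hle _; apply: ereal_sup_ubound; by exists H, j.
move=> h; have := leeD2r (e%:E) h.
by rewrite -EFinD subrK.
Qed.

Theorem mainTheorem9_aux (G : group) :
  finitely_presented G ->
  (rdef Rl G - 1 <= DG Rl G) /\
  (1 < rdef Rl G ->
     exists (H : subgroup G), finite_index H /\ 1 < def Rl (sub_group H)).
Proof.
move=> _.
have p1 : rdef Rl G - 1 <= DG Rl G.
  rewrite leeBlDr //; apply: ge_ereal_sup => _ [x hx <-].
  by rewrite -leeBlDr // -EFinB; apply: key.
split => // h1.
have : 0 < DG Rl G.
  apply: lt_le_trans p1; by rewrite sube_gt0.
case/ereal_sup_gt => _ [H [j [hj ->]]] hpos.
have j0 : (0 < j)%N.
  case: j hj {hpos} => // [[r hr]]; have [i _] := hr (gone G); by case: i.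
exists H; split; first by exists j.
rewrite -sube_gt0; move: hpos; rewrite pmule_lgt0 // lte_fin invr_gt0 ltr0n //.
Qed.
End Main.

Import Order.TTheory GRing.Theory Num.Theory.
Local Open Scope ring_scope.
Local Open Scope ereal_scope.

Theorem mainTheorem9 (Rl : realType) (G : group) :
  finitely_presented G ->
  (rdef Rl G - 1 <= DG Rl G) /\
  (1 < rdef Rl G ->
     exists (H : subgroup G), finite_index H /\ 1 < def Rl (sub_group H)).
Proof. exact: mainTheorem9_aux. Qed.
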